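(* Let $K\subseteq\mathbb{R}^n$ be a nonempty open convex set and $h:K\to\mathbb{R}$ a continuously differentiable function. If $h$ is strongly quasiconvex with modulus $\gamma>0$ on $K$, then $h$ is CFZ-strongly quasiconvex on $K$.
   Context: For a convex set $\emptyset\neq K\subseteq\mathbb{R}^n$ and $\gamma> 0$, $h:K\to\mathbb{R}$ is strongly quasiconvex with modulus $\gamma$ on $K$ if $h(ty+(1-t)x)\le \max\{h(y),h(x)\}-t(1-t)\frac{\gamma}{2}\|x-y\|^2$ for all $x,y\in K$, $t\in[0,1]$. For $t\in\mathbb{R}$, $S_t(h):=\{x\in K: h(x)\le t\}$; $\mathcal{B}(\bar x,\rho)$ is the open Euclidean ball. Given $\alpha\in\mathbb{R}$, $h$ is $\alpha$-quasiconvex at $\bar x\in K$ if there exist $\rho>0$ and $e\in\mathbb{R}^n$ with $\|e\|=1$ such that for all $y\in K\cap\mathcal{B}(\bar x,\rho)\cap S_{h(\bar x)}(h)$ one has $\langle e,y-\bar x\rangle\ge \alpha\|y-\bar x\|^2$. The function $h$ is CFZ-strongly quasiconvex on $K$ if for every $\bar x\in K$ there exists $\alpha(\bar x)>0$ such that $h$ is $\alpha(\bar x)$-quasiconvex at $\bar x$. *)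

(* Defs.v *)
From mathcomp Require Import all_boot all_order all_algebra.
From mathcomp Require Import all_classical all_reals all_analysis.
Set Implicit Arguments. Unset Strict Implicit. Unset Printing Implicit Defensive.
Import Order.TTheory GRing.Theory Num.Theory.
Import numFieldNormedType.Exports.
Local Open Scope classical_set_scope.
Local Open Scope ring_scope.

Definition dotv {R : realType} {n : nat} (u v : 'rV[R]_n) : R :=
  \sum_(i < n) u 0 i * v 0 i.
Definition enorm {R : realType} {n : nat} (u : 'rV[R]_n) : R :=
  Num.sqrt (dotv u u).

Definition strongly_quasiconvex {R : realType} {n : nat}
  (K : set 'rV[R]_n) (h : 'rV[R]_n -> R) (gamma : R) : Prop :=
  forall x y, K x -> K y -> forall t : R, 0 <= t <= 1 ->
    h (t *: y + (1 - t) *: x) <=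
      Num.max (h y) (h x) - t * (1 - t) * (gamma / 2) * enorm (x - y) ^+ 2.

Definition sublevel {R : realType} {n : nat}
  (K : set 'rV[R]_n) (h : 'rV[R]_n -> R) (t : R) : set 'rV[R]_n :=
  [set x | K x /\ h x <= t].

Definition eball {R : realType} {n : nat} (xb : 'rV[R]_n) (rho : R)
  : set 'rV[R]_n := [set y | enorm (y - xb) < rho].

Definition alpha_quasiconvex_at {R : realType} {n : nat}
  (K : set 'rV[R]_n) (h : 'rV[R]_n -> R) (alpha : R) (xb : 'rV[R]_n) : Prop :=
  exists rho : R, 0 < rho /\ exists e : 'rV[R]_n, enorm e = 1 /\
    forall y, (K `&` eball xb rho `&` sublevel K h (h xb)) y ->
      alpha * enorm (y - xb) ^+ 2 <= dotv e (y - xb).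

Definition CFZ_strongly_quasiconvex {R : realType} {n : nat}
  (K : set 'rV[R]_n) (h : 'rV[R]_n -> R) : Prop :=
  forall xb, K xb -> exists alpha : R, 0 < alpha /\ alpha_quasiconvex_at K h alpha xb.

Definition C1_on {R : realType} {n : nat}
  (K : set 'rV[R]_n) (h : 'rV[R]_n -> R) : Prop :=
  exists grad : 'rV[R]_n -> 'rV[R]_n,
    {within K, continuous grad} /\
    forall x, K x -> differentiable h x /\ forall v, 'd h x v = dotv (grad x) v.

(* Main.v *)
Require Import Defs.
From mathcomp Require Import all_boot all_order all_algebra.
From mathcomp Require Import all_classical all_reals all_analysis.
From mathcomp Require Import lra.
Import Order.TTheory GRing.Theory Num.Theory.
Import numFieldNormedType.Exports.
Local Open Scope classical_set_scope.
Local Open Scope ring_scope.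

Lemma andP_intro (a b : bool) : a -> b -> a && b. Proof. by move=> -> ->. Qed.
Section S.
Variables (R : realType) (n : nat).
Implicit Types u v : 'rV[R]_n.

Lemma dotv_ge0 u : 0 <= dotv u u.
Proof. by apply: sumr_ge0 => i _; rewrite -expr2 sqr_ge0. Qed.

Lemma dotvZl a u v : dotv (a *: u) v = a * dotv u v.
Proof. by rewrite /dotv mulr_sumr; apply: eq_bigr => i _; rewrite mxE mulrA. Qed.

Lemma dotvNl u v : dotv (- u) v = - dotv u v.
Proof. by rewrite -scaleN1r dotvZl mulN1r. Qed.

Lemma enorm_sq u : enorm u ^+ 2 = dotv u u.
Proof. by rewrite /enorm sqr_sqrtr // dotv_ge0. Qed.

Lemma dotv_eq0 u : dotv u u = 0 -> u = 0.
Proof.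
move=> /eqP; rewrite psumr_eq0; last by move=> i _; rewrite -expr2 sqr_ge0.
move=> /allP H; apply/rowP => i; rewrite mxE.
have := H i (mem_index_enum i); rewrite -expr2 sqrf_eq0 => /eqP //.
Qed.

Lemma dotv0r u : dotv u 0 = 0.
Proof. by rewrite /dotv big1 // => i _; rewrite mxE mulr0. Qed.

Lemma dotv0l u : dotv 0 u = 0.
Proof. by rewrite /dotv big1 // => i _; rewrite mxE mul0r. Qed.

Lemma enormB u v : enorm (u - v) = enorm (v - u).
Proof. rewrite -opprB /enorm; congr Num.sqrt; rewrite /dotv; apply: eq_bigr => i _; by rewrite !mxE mulrNN. Qed.

Lemma dirineq (f : 'rV[R]_n -> R) x d c : differentiable f x -> 0 <= c ->
  (forall t, 0 < t <= 1 -> f (t *: d + x) <= f x - t * (1 - t) * c) ->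
  'd f x d <= - c.
Proof.
move=> df c0 H.
have := @diff_derivable _ _ _ _ _ d df; rewrite /derivable => cv.
rewrite -deriveE // /derive.
set Q := (fun h => _).
have cvr : Q @ 0^'+ --> lim (Q @ 0^').
  have HF : ((0:R)^'+ : set_system R) `=>` (0:R)^'.

    move=> A HA; move: HA; rewrite /dnbhs /within /=; apply: filterS => t Ht tpos; apply: Ht; by rewrite gt_eqF.
  exact: cvg_trans (cvg_app Q HF) cv.
have key : forall e : R, 0 < e <= 1 -> lim (Q @ 0^') <= - c + e * c.
  move=> e /andP[e0 e1].
  apply: (cvgr_to_le cvr).
  near=> t.
  have t0 : 0 < t by near: t; exact: nbhs_right_gt.
  have te : t <= e by near: t; exact: nbhs_right_le.
  rewrite /Q /= .
  have := H t; rewrite t0 (le_trans te e1) => /(_ isT) Ht.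
  change (t^-1 * (f (t *: d + x) - f x) <= - c + e * c).
  apply: (le_trans (y := t^-1 * (- (t * (1 - t) * c)))).
    by rewrite ler_pM2l ?invr_gt0 //; lra.
  rewrite mulrN -!mulrA mulKf ?gt_eqF //.
  have : 0 <= (e - t) * c by rewrite mulr_ge0 // subr_ge0.
  lra.
apply/ler_addgt0Pr => eps eps0.
have ec : 0 < eps + c by lra.
have e0 : 0 < eps / (eps + c) by rewrite divr_gt0.
have e1 : eps / (eps + c) <= 1 by rewrite ler_pdivrMr // mul1r; lra.
apply: (le_trans (key _ (introT andP (conj e0 e1)))); rewrite lerD2l.
rewrite mulrAC ler_pdivrMr // ler_pM2l //; lra.
Unshelve. all: by end_near.
Qed.
Lemma dotvZr a u v : dotv u (a *: v) = a * dotv u v.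
Proof. by rewrite /dotv mulr_sumr; apply: eq_bigr => i _; rewrite mxE mulrCA. Qed.

Lemma enorm0 : enorm (0 : 'rV[R]_n) = 0.
Proof. by rewrite /enorm dotv0l sqrtr0. Qed.
End S.

Lemma unit_exists (R : realType) n : (0 < n)%N -> exists e : 'rV[R]_n, enorm e = 1.
Proof.
case: n => [//|m] _.
exists (\row_(i < m.+1) (if i == ord0 then 1 else 0 : R)).
rewrite /enorm /dotv big_ord_recl !mxE eqxx big1 ?addr0 ?mulr1 ?sqrtr1 //.
by move=> i _; rewrite !mxE eq_sym (negbTE (neq_lift ord0 i)) mul0r.
Qed.

Theorem mainTheorem2 (R : realType) (n : nat) (K : set 'rV[R]_n)
  (h : 'rV[R]_n -> R) (gamma : R) :
  (0 < n)%N ->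
  K !=set0 -> open K -> convex_set K ->
  C1_on K h ->
  0 < gamma -> strongly_quasiconvex K h gamma ->
  CFZ_strongly_quasiconvex K h.
Proof.
move=> n0 _ _ _ [grad [_ hd]] g0 sq xb Kxb.
set g := grad xb.
have key : forall y, K y -> h y <= h xb ->
    dotv g (y - xb) <= - (gamma / 2 * dotv (y - xb) (y - xb)).
  move=> y Ky hy.
  have [dh dg] := hd xb Kxb.
  rewrite -dg; apply: dirineq => //.
    by rewrite mulr_ge0 ?dotv_ge0 // divr_ge0 // ltW.
  move=> t /andP[t0 t1].
  have := sq xb y Kxb Ky t; rewrite (ltW t0) t1 => /(_ isT).
  rewrite max_r // enormB enorm_sq -[t * _ * _ * _]mulrA.
  suff -> : t *: (y - xb) + xb = t *: y + (1 - t) *: xb by [].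
  by rewrite scalerBr scalerBl scale1r addrAC -addrA.
have [/dotv_eq0 gz|gnz] := eqVneq (dotv g g) 0.
  have [e e1] := @unit_exists R n n0.
  exists 1; split => //; exists 1; split => //; exists e; split => //.
  move=> y [[Ky _] [_ hy]].
  have := key y Ky hy; rewrite gz dotv0l.
  have := @dotv_ge0 _ _ (y - xb).
  have g2 : 0 < gamma / 2 by rewrite divr_gt0.
  move=> H1 H2.
  have : dotv (y - xb) (y - xb) = 0 by nra.
  move=> /dotv_eq0 ->; by rewrite enorm0 expr0n /= mulr0 dotv0r.
have gp : 0 < dotv g g by rewrite lt_def gnz dotv_ge0.
set N := enorm g.
have Np : 0 < N by rewrite /N /enorm sqrtr_gt0.
have N2 : N ^+ 2 = dotv g g by rewrite enorm_sq.
exists (gamma / 2 * N^-1); split; first by rewrite !divr_gt0.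
exists 1; split => //; exists ((- N^-1) *: g); split.
  rewrite /enorm dotvZl dotvZr -N2 mulrA mulrNN -expr2 -exprMn mulVf ?gt_eqF //.
  by rewrite expr1n sqrtr1.
move=> y [[Ky _] [_ hy]].
have := key y Ky hy.
rewrite dotvZl enorm_sq.
have Nip : 0 < N^-1 by rewrite invr_gt0.
move=> H.
have : 0 <= N^-1 * (- dotv g (y - xb) - gamma / 2 * dotv (y - xb) (y - xb)).
  by apply: mulr_ge0; [exact: ltW | lra].
lra.
Qed.
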